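(* Existential second-order universal Horn logic does not capture the complexity class $\mathbf{P}$, even when restricted to finite input structures whose vocabulary includes a successor relation: there is a decision problem on such structures that is decidable in polynomial time but is not expressible by any ESO universal Horn sentence.
   Context: ESO universal Horn logic consists of sentences of the form $\exists S_1 \cdots \exists S_m\, \forall \bar{x}\, \psi$, where $S_1,\dots,S_m$ are second-order (relation) variables and $\forall \bar x\,\psi$ is a universal first-order formula whose matrix $\psi$ is a conjunction of Horn clauses with respect to the quantified relations $S_i$ (each clause contains at most one positive occurrence of an atom built from an $S_i$; atoms and negated atoms over the input vocabulary are unrestricted). A decision problem (a class of finite structures over a fixed input vocabulary) is expressed by such a sentence if a finite input structure is a yes-instance exactly when it satisfies the sentence. A successor relation is a binary relation in the input vocabulary interpreted as the successor relation of a linear order on the universe. $\mathbf{P}$ is the class of problems decidable in polynomial time. *)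

(* Defs.v *)
From mathcomp Require Import all_boot.
Set Implicit Arguments. Unset Strict Implicit. Unset Printing Implicit Defensive.

(* A vocabulary is the list of arities of its relation symbols.
   A finite structure has the nonempty universe 'I_(usize.+1). *)
Record structure (voc : seq nat) := Struct {
  usize : nat;
  srel : forall i : 'I_(size voc), {set (nth 0 voc i).-tuple 'I_usize.+1}
}.

Definition iso (voc : seq nat) (A B : structure voc) : Prop :=
  exists f : 'I_(usize A).+1 -> 'I_(usize B).+1,
    bijective f /\
    forall (i : 'I_(size voc)) (t : (nth 0 voc i).-tuple 'I_(usize A).+1),
      (t \in srel A i) = (map_tuple f t \in srel B i).

(* A decision problem = a class of structures closed under isomorphism. *)
Definition iso_closed (voc : seq nat) (K : structure voc -> Prop) : Prop :=
  forall A B, iso A B -> K A -> K B.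

(* The symbol s is interpreted as the successor relation of some linear
   order of the universe (the order given by the ranks p x). *)
Definition is_succ (voc : seq nat) (s : 'I_(size voc)) (A : structure voc) : Prop :=
  exists p : 'I_(usize A).+1 -> 'I_(usize A).+1, bijective p /\
    forall t : (nth 0 voc s).-tuple 'I_(usize A).+1,
      t \in srel A s <->
      exists x y, val t = [:: x; y] /\ nat_of_ord (p y) = (p x).+1.

(* Literals over first-order variables 'I_k, input vocabulary voc and
   second-order (quantified) relation variables with arities sov.
   The boolean is the polarity (true = positive literal). *)
Inductive lit (voc sov : seq nat) (k : nat) : Type :=
  | LEq : bool -> 'I_k -> 'I_k -> lit voc sov k
  | LIn : bool -> forall i : 'I_(size voc), (nth 0 voc i).-tuple 'I_k -> lit voc sov k
  | LSO : bool -> forall j : 'I_(size sov), (nth 0 sov j).-tuple 'I_k -> lit voc sov k.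

(* An ESO universal sentence  exists S_1..S_m forall x_1..x_k, /\ clauses,
   each clause being a disjunction of literals. *)
Record eso_sentence (voc : seq nat) := ESO {
  so_arities : seq nat;
  fo_nvars : nat;
  clauses : seq (seq (lit voc so_arities fo_nvars))
}.

Definition is_pos_so_lit (voc sov : seq nat) (k : nat) (l : lit voc sov k) : bool :=
  if l is LSO true _ _ then true else false.

(* Horn w.r.t. the quantified relations: each clause has at most one
   positive second-order atom; input/equality literals are unrestricted. *)
Definition is_horn (voc : seq nat) (phi : eso_sentence voc) : bool :=
  all (fun c => count (@is_pos_so_lit _ _ _) c <= 1) (clauses phi).

Definition eval_lit (voc sov : seq nat) (k : nat) (A : structure voc)
    (S : forall j : 'I_(size sov), {set (nth 0 sov j).-tuple 'I_(usize A).+1})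
    (a : 'I_k -> 'I_(usize A).+1) (l : lit voc sov k) : bool :=
  match l with
  | LEq b x y => (a x == a y) == b
  | LIn b i xs => (map_tuple a xs \in srel A i) == b
  | LSO b j xs => (map_tuple a xs \in S j) == b
  end.

Definition sat (voc : seq nat) (A : structure voc) (phi : eso_sentence voc) : Prop :=
  exists S : forall j : 'I_(size (so_arities phi)),
               {set (nth 0 (so_arities phi) j).-tuple 'I_(usize A).+1},
    forall a : 'I_(fo_nvars phi) -> 'I_(usize A).+1,
      all (fun c => has (eval_lit S a) c) (clauses phi).

Inductive move := MLeft | MRight | MStay.

(* States 'I_nst.+1 (start state 0); tape alphabet 'I_nsym.+3 with
   0 = blank, 1 = bit false, 2 = bit true. The machine halts when
   delta is undefined; it accepts iff it halts in an accepting state. *)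
Record TM := MkTM {
  tm_nst : nat;
  tm_nsym : nat;
  tm_delta : 'I_tm_nst.+1 -> 'I_tm_nsym.+3 ->
             option ('I_tm_nst.+1 * 'I_tm_nsym.+3 * move);
  tm_acc : 'I_tm_nst.+1 -> bool
}.

Section TMsem.
Variable M : TM.
Definition sym := 'I_(tm_nsym M).+3.
Definition blank : sym := inord 0.
Definition sym_of_bit (b : bool) : sym := if b then inord 2 else inord 1.

(* configuration: state, left tape (nearest cell first), head cell, right tape *)
Definition config := ('I_(tm_nst M).+1 * seq sym * sym * seq sym)%type.

Definition tm_init (w : seq bool) : config :=
  match map sym_of_bit w with
  | [::] => (ord0, [::], blank, [::])
  | a :: r => (ord0, [::], a, r)
  end.

Definition tm_step (c : config) : config :=
  let: (q, L, a, R) := c in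
  match tm_delta q a with
  | None => c
  | Some (q', b, MStay) => (q', L, b, R)
  | Some (q', b, MLeft) =>
      match L with [::] => (q', [::], blank, b :: R)
                 | x :: L' => (q', L', x, b :: R) end
  | Some (q', b, MRight) =>
      match R with [::] => (q', b :: L, blank, [::])
                 | x :: R' => (q', b :: L, x, R') end
  end.

Definition tm_halted (c : config) : bool :=
  let: (q, _, a, _) := c in if tm_delta q a is None then true else false.

Definition tm_accepting (c : config) : bool :=
  let: (q, _, _, _) := c in @tm_acc M q.
End TMsem.

Definition encode (voc : seq nat) (A : structure voc) : seq bool :=
  nseq (usize A).+1 true ++ false ::
  flatten [seq [seq t \in srel A i | t <- enum {: (nth 0 voc i).-tuple 'I_(usize A).+1}]
          | i <- enum 'I_(size voc)].

Definition in_P (voc : seq nat) (K : structure voc -> Prop) : Prop :=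
  exists (M : TM) (c d : nat),
    forall A : structure voc,
      let cfg := iter (c * (size (encode A)).+1 ^ d) (@tm_step M) (tm_init M (encode A)) in
      tm_halted cfg /\ (tm_accepting cfg <-> K A).

(* Main.v *)
Require Import Defs.
From mathcomp Require Import all_boot.
Set Implicit Arguments. Unset Strict Implicit.

Definition mkst (n : nat) : 'I_24 := Ordinal (ltn_pmod n (isT : 0 < 24)).

Definition nxt (k1 k2 q a : nat) : option nat :=
  if q == 0 then (if a == 2 then Some 1 else None) else
  if q == 1 then (if a == 2 then Some 2 else None) else
  if q == 2 then (if a == 1 then Some 6 else None) else
  if q < 23 then
    let pos := (q - 3) %/ 4 in let m := (q - 3) %% 4 in
    let m1 := m %/ 2 == 1 in let m2 := m %% 2 == 1 in
    if pos < 4 then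
      if a == 0 then None else
      let bit := a == 2 in
      let m1' := m1 && (bit == (pos == k1)) in
      let m2' := m2 && (bit == (pos == k2)) in
      if m1' || m2' then Some (3 + pos.+1 * 4 + 2 * m1' + m2') else None
    else if (a == 0) && (m1 || m2) then Some 23 else None
  else None.

Definition TMk (k1 k2 : nat) : TM :=
  @MkTM 23 0 (fun q a => omap (fun q' => (mkst q', a, MRight)) (nxt k1 k2 (val q) (val a)))
    (fun q => val q == 23).

Definition pat (k : nat) : seq bool := [:: true; true; false] ++ [seq j == k | j <- iota 0 4].

Definition B0 : 'I_3 := Ordinal (isT : 0 < 3).
Definition sym' (b : bool) : 'I_3 := if b then Ordinal (isT : 2 < 3) else Ordinal (isT : 1 < 3).

Section S.
Variables k1 k2 : nat.
Let M := TMk k1 k2.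
Definition mystep (c : config M) : config M :=
  let: (q, L, a, R) := c in
  match tm_delta q a with
  | None => c
  | Some (q', b, MStay) => (q', L, b, R)
  | Some (q', b, MLeft) =>
      match L with [::] => (q', [::], B0, b :: R)
                 | x :: L' => (q', L', x, b :: R) end
  | Some (q', b, MRight) =>
      match R with [::] => (q', b :: L, B0, [::])
                 | x :: R' => (q', b :: L, x, R') end
  end.
Definition myinit (w : seq bool) : config M :=
  match map sym' w with
  | [::] => (ord0, [::], B0, [::])
  | a :: r => (ord0, [::], a, r)
  end.

Lemma blankE : @blank M = B0.
Proof. by apply/val_inj; rewrite /= inordK. Qed.
Lemma symE b : @sym_of_bit M b = sym' b.
Proof. by apply/val_inj; case: b; rewrite /= inordK. Qed.
Lemma stepE : @tm_step M =1 mystep.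
Proof. by case=> [[[q L] a] R]; rewrite /tm_step /mystep blankE. Qed.
Lemma initE w : @tm_init M w = myinit w.
Proof. by rewrite /tm_init /myinit (eq_map symE) blankE. Qed.
End S.

Lemma TM_00 : forall w,
  tm_halted (iter 9 (@tm_step (TMk 0 0)) (@tm_init (TMk 0 0) w)) /\
  (tm_accepting (iter 9 (@tm_step (TMk 0 0)) (@tm_init (TMk 0 0) w)) = (w \in [:: pat 0; pat 0])).
Proof.
move=> w; rewrite initE (eq_iter (@stepE 0 0)); move: w.
do 8 (try (case=> [|[] ])).
all: split; vm_compute; reflexivity.
Qed.
Lemma TM_01 : forall w,
  tm_halted (iter 9 (@tm_step (TMk 0 1)) (@tm_init (TMk 0 1) w)) /\
  (tm_accepting (iter 9 (@tm_step (TMk 0 1)) (@tm_init (TMk 0 1) w)) = (w \in [:: pat 0; pat 1])).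
Proof.
move=> w; rewrite initE (eq_iter (@stepE 0 1)); move: w.
do 8 (try (case=> [|[] ])).
all: split; vm_compute; reflexivity.
Qed.
Lemma TM_02 : forall w,
  tm_halted (iter 9 (@tm_step (TMk 0 2)) (@tm_init (TMk 0 2) w)) /\
  (tm_accepting (iter 9 (@tm_step (TMk 0 2)) (@tm_init (TMk 0 2) w)) = (w \in [:: pat 0; pat 2])).
Proof.
move=> w; rewrite initE (eq_iter (@stepE 0 2)); move: w.
do 8 (try (case=> [|[] ])).
all: split; vm_compute; reflexivity.
Qed.
Lemma TM_03 : forall w,
  tm_halted (iter 9 (@tm_step (TMk 0 3)) (@tm_init (TMk 0 3) w)) /\
  (tm_accepting (iter 9 (@tm_step (TMk 0 3)) (@tm_init (TMk 0 3) w)) = (w \in [:: pat 0; pat 3])).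
Proof.
move=> w; rewrite initE (eq_iter (@stepE 0 3)); move: w.
do 8 (try (case=> [|[] ])).
all: split; vm_compute; reflexivity.
Qed.
Lemma TM_10 : forall w,
  tm_halted (iter 9 (@tm_step (TMk 1 0)) (@tm_init (TMk 1 0) w)) /\
  (tm_accepting (iter 9 (@tm_step (TMk 1 0)) (@tm_init (TMk 1 0) w)) = (w \in [:: pat 1; pat 0])).
Proof.
move=> w; rewrite initE (eq_iter (@stepE 1 0)); move: w.
do 8 (try (case=> [|[] ])).
all: split; vm_compute; reflexivity.
Qed.
Lemma TM_11 : forall w,
  tm_halted (iter 9 (@tm_step (TMk 1 1)) (@tm_init (TMk 1 1) w)) /\
  (tm_accepting (iter 9 (@tm_step (TMk 1 1)) (@tm_init (TMk 1 1) w)) = (w \in [:: pat 1; pat 1])).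
Proof.
move=> w; rewrite initE (eq_iter (@stepE 1 1)); move: w.
do 8 (try (case=> [|[] ])).
all: split; vm_compute; reflexivity.
Qed.
Lemma TM_12 : forall w,
  tm_halted (iter 9 (@tm_step (TMk 1 2)) (@tm_init (TMk 1 2) w)) /\
  (tm_accepting (iter 9 (@tm_step (TMk 1 2)) (@tm_init (TMk 1 2) w)) = (w \in [:: pat 1; pat 2])).
Proof.
move=> w; rewrite initE (eq_iter (@stepE 1 2)); move: w.
do 8 (try (case=> [|[] ])).
all: split; vm_compute; reflexivity.
Qed.
Lemma TM_13 : forall w,
  tm_halted (iter 9 (@tm_step (TMk 1 3)) (@tm_init (TMk 1 3) w)) /\
  (tm_accepting (iter 9 (@tm_step (TMk 1 3)) (@tm_init (TMk 1 3) w)) = (w \in [:: pat 1; pat 3])).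
Proof.
move=> w; rewrite initE (eq_iter (@stepE 1 3)); move: w.
do 8 (try (case=> [|[] ])).
all: split; vm_compute; reflexivity.
Qed.
Lemma TM_20 : forall w,
  tm_halted (iter 9 (@tm_step (TMk 2 0)) (@tm_init (TMk 2 0) w)) /\
  (tm_accepting (iter 9 (@tm_step (TMk 2 0)) (@tm_init (TMk 2 0) w)) = (w \in [:: pat 2; pat 0])).
Proof.
move=> w; rewrite initE (eq_iter (@stepE 2 0)); move: w.
do 8 (try (case=> [|[] ])).
all: split; vm_compute; reflexivity.
Qed.
Lemma TM_21 : forall w,
  tm_halted (iter 9 (@tm_step (TMk 2 1)) (@tm_init (TMk 2 1) w)) /\
  (tm_accepting (iter 9 (@tm_step (TMk 2 1)) (@tm_init (TMk 2 1) w)) = (w \in [:: pat 2; pat 1])).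
Proof.
move=> w; rewrite initE (eq_iter (@stepE 2 1)); move: w.
do 8 (try (case=> [|[] ])).
all: split; vm_compute; reflexivity.
Qed.
Lemma TM_22 : forall w,
  tm_halted (iter 9 (@tm_step (TMk 2 2)) (@tm_init (TMk 2 2) w)) /\
  (tm_accepting (iter 9 (@tm_step (TMk 2 2)) (@tm_init (TMk 2 2) w)) = (w \in [:: pat 2; pat 2])).
Proof.
move=> w; rewrite initE (eq_iter (@stepE 2 2)); move: w.
do 8 (try (case=> [|[] ])).
all: split; vm_compute; reflexivity.
Qed.
Lemma TM_23 : forall w,
  tm_halted (iter 9 (@tm_step (TMk 2 3)) (@tm_init (TMk 2 3) w)) /\
  (tm_accepting (iter 9 (@tm_step (TMk 2 3)) (@tm_init (TMk 2 3) w)) = (w \in [:: pat 2; pat 3])).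
Proof.
move=> w; rewrite initE (eq_iter (@stepE 2 3)); move: w.
do 8 (try (case=> [|[] ])).
all: split; vm_compute; reflexivity.
Qed.
Lemma TM_30 : forall w,
  tm_halted (iter 9 (@tm_step (TMk 3 0)) (@tm_init (TMk 3 0) w)) /\
  (tm_accepting (iter 9 (@tm_step (TMk 3 0)) (@tm_init (TMk 3 0) w)) = (w \in [:: pat 3; pat 0])).
Proof.
move=> w; rewrite initE (eq_iter (@stepE 3 0)); move: w.
do 8 (try (case=> [|[] ])).
all: split; vm_compute; reflexivity.
Qed.
Lemma TM_31 : forall w,
  tm_halted (iter 9 (@tm_step (TMk 3 1)) (@tm_init (TMk 3 1) w)) /\
  (tm_accepting (iter 9 (@tm_step (TMk 3 1)) (@tm_init (TMk 3 1) w)) = (w \in [:: pat 3; pat 1])).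
Proof.
move=> w; rewrite initE (eq_iter (@stepE 3 1)); move: w.
do 8 (try (case=> [|[] ])).
all: split; vm_compute; reflexivity.
Qed.
Lemma TM_32 : forall w,
  tm_halted (iter 9 (@tm_step (TMk 3 2)) (@tm_init (TMk 3 2) w)) /\
  (tm_accepting (iter 9 (@tm_step (TMk 3 2)) (@tm_init (TMk 3 2) w)) = (w \in [:: pat 3; pat 2])).
Proof.
move=> w; rewrite initE (eq_iter (@stepE 3 2)); move: w.
do 8 (try (case=> [|[] ])).
all: split; vm_compute; reflexivity.
Qed.
Lemma TM_33 : forall w,
  tm_halted (iter 9 (@tm_step (TMk 3 3)) (@tm_init (TMk 3 3) w)) /\
  (tm_accepting (iter 9 (@tm_step (TMk 3 3)) (@tm_init (TMk 3 3) w)) = (w \in [:: pat 3; pat 3])).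
Proof.
move=> w; rewrite initE (eq_iter (@stepE 3 3)); move: w.
do 8 (try (case=> [|[] ])).
all: split; vm_compute; reflexivity.
Qed.
Lemma TM_ok k1 k2 : k1 < 4 -> k2 < 4 -> forall w,
  tm_halted (iter 9 (@tm_step (TMk k1 k2)) (@tm_init (TMk k1 k2) w)) /\
  (tm_accepting (iter 9 (@tm_step (TMk k1 k2)) (@tm_init (TMk k1 k2) w)) = (w \in [:: pat k1; pat k2])).
Proof.
case: k1 => [|[|[|[|k1]]]] // _; case: k2 => [|[|[|[|k2]]]] // _;
  first [exact: TM_00|exact: TM_01|exact: TM_02|exact: TM_03|exact: TM_10|exact: TM_11|exact: TM_12|exact: TM_13|
         exact: TM_20|exact: TM_21|exact: TM_22|exact: TM_23|exact: TM_30|exact: TM_31|exact: TM_32|exact: TM_33].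
Qed.
Definition voc : seq nat := [:: 2].
Definition s0 : 'I_(size voc) := ord0.
Definition K (A : structure voc) : Prop := usize A = 1 /\ is_succ s0 A.

Definition o0 : 'I_2 := ord0.
Definition o1 : 'I_2 := ord_max.
Definition t1 : 2.-tuple 'I_2 := [tuple o0; o1].
Definition t2 : 2.-tuple 'I_2 := [tuple o1; o0].

Lemma ord2 (x : 'I_2) : x = o0 \/ x = o1.
Proof. case: x => [[|[|m]] h]; [left|right|by []]; exact: val_inj. Qed.

Lemma iso_size voc' (A B : structure voc') : iso A B -> usize A = usize B.
Proof. case=> f [fb _]; have := bij_eq_card fb; rewrite !card_ord; by case. Qed.

Lemma iso_succ voc' (s : 'I_(size voc')) (A B : structure voc') :
  iso A B -> is_succ s A -> is_succ s B.
Proof.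
move=> HI; have eAB := iso_size HI; move: HI.
case=> f [fb Hf] [p [pb Hp]].
case: (fb) => g fK gK.
have eS : (usize A).+1 = (usize B).+1 by rewrite eAB.
exists (fun x => cast_ord eS (p (g x))); split.
  apply: (@bij_comp _ _ _ (cast_ord eS) (fun x => p (g x))).
    exact: (Bijective (cast_ordK eS) (cast_ordKV eS)).
  exact: (bij_comp pb (Bijective gK fK)).
move=> t.
have Et : map_tuple f (map_tuple g t) = t.
  by apply/val_inj; rewrite /= -map_comp map_id_in // => x _ /=; rewrite gK.
rewrite -{1}Et -Hf; split.
- case/Hp=> x [y [ht hp]]; exists (f x), (f y); rewrite !fK; split => //.
  have -> : val t = map f (val (map_tuple g t)) by rewrite -{1}Et.
  by rewrite ht.
- case=> x [y [ht hp]]; apply/Hp; exists (g x), (g y); split => //.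
  by rewrite /= ht.
Qed.

Lemma eqb_iff (b1 b2 : bool) : (b1 <-> b2) -> b1 = b2.
Proof. by case: b1; case: b2 => // [[h1 h2]]; [have := h1 isT | have := h2 isT]. Qed.

Lemma succ2 (r : {set 2.-tuple 'I_2}) (p : 'I_2 -> 'I_2) :
  bijective p ->
  (forall t : 2.-tuple 'I_2, t \in r <-> exists x y, val t = [:: x; y] /\ nat_of_ord (p y) = (p x).+1) ->
  (forall t, (t \in r) = (t == t1)) \/ (forall t, (t \in r) = (t == t2)).
Proof.
move=> pb Hp; have pinj := bij_inj pb.
have ne : o1 <> o0 by [].
case: (ord2 (p o0)) => H0; case: (ord2 (p o1)) => H1.
- by case: ne; apply: pinj; rewrite H0 H1.
- left=> t; apply: eqb_iff; split.
  + case/Hp=> x [y [ht hp]]; move: hp.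
    by case: (ord2 x) ht => -> ht; case: (ord2 y) ht => -> ht; rewrite ?H0 ?H1 //= => _; apply/eqP/val_inj.
  + move/eqP=> ->; apply/Hp; exists o0, o1; by rewrite H0 H1.
- right=> t; apply: eqb_iff; split.
  + case/Hp=> x [y [ht hp]]; move: hp.
    by case: (ord2 x) ht => -> ht; case: (ord2 y) ht => -> ht; rewrite ?H0 ?H1 //= => _; apply/eqP/val_inj.
  + move/eqP=> ->; apply/Hp; exists o1, o0; by rewrite H0 H1.
- by case: ne; apply: pinj; rewrite H0 H1.
Qed.

Definition A1 : structure voc := @Struct voc 1 (fun i => [set t | val t == [:: o0; o1]]).
Definition A2 : structure voc := @Struct voc 1 (fun i => [set t | val t == [:: o1; o0]]).
Definition Bst : structure voc := @Struct voc 0 (fun i => set0).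

Lemma KA1 : K A1.
Proof.
split=> //; exists id; split; first exact: (@Bijective _ _ id id).
move=> t; rewrite inE; split.
- move/eqP=> ->; by exists o0, o1.
- case=> x [y [ht hp]]; rewrite ht.
  by move: hp; case: (ord2 x) => ->; case: (ord2 y) => ->.
Qed.

Definition sw (x : 'I_2) : 'I_2 := if x == o0 then o1 else o0.
Lemma swK : involutive sw.
Proof. by move=> x; case: (ord2 x) => ->. Qed.

Lemma KA2 : K A2.
Proof.
split=> //; exists sw; split; first exact: (Bijective swK swK).
move=> t; rewrite inE; split.
- move/eqP=> ->; by exists o1, o0.
- case=> x [y [ht hp]]; rewrite ht.
  by move: hp; case: (ord2 x) => ->; case: (ord2 y) => ->.
Qed.

Lemma succB : is_succ s0 Bst.
Proof.
exists id; split; first exact: (@Bijective _ _ id id).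
move=> t; rewrite in_set0; split => //.
by case=> x [y [_]]; rewrite (ord1 x) (ord1 y).
Qed.

Lemma sat_sub (A : structure voc) (phi : eso_sentence voc) :
  (forall (i : 'I_(size voc)) (t : (nth 0 voc i).-tuple 'I_(usize A).+1), all (pred1 ord0) t -> t \notin srel A i) ->
  sat A phi -> sat Bst phi.
Proof.
move=> Hno [S HS].
pose e : 'I_1 -> 'I_(usize A).+1 := fun _ => ord0.
pose S' : forall j : 'I_(size (so_arities phi)), {set (nth 0 (so_arities phi) j).-tuple 'I_(usize Bst).+1} :=
  fun j => [set t | map_tuple e t \in S j].
exists S' => a; have := HS (fun x => e (a x)).
have E : forall l, eval_lit S' a l = eval_lit S (fun x => e (a x)) l.
  case=> [b x y | b i xs | b j xs] /=.
  - by rewrite (ord1 (a x)) (ord1 (a y)) !eqxx.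
  - have /negbTE -> : map_tuple (fun x => e (a x)) xs \notin srel A i.
      apply: Hno.
      have h : all (pred1 ord0) (map (fun x => e (a x)) xs) by apply/allP => z /mapP [u _ ->].
      exact: h.
    by rewrite in_set0.
  - rewrite inE; suff -> : map_tuple e (map_tuple a xs) = map_tuple (fun x => e (a x)) xs by [].
    by apply/val_inj; rewrite /= -map_comp.
by rewrite (eq_all (eq_has E)).
Qed.

Lemma A1_noloop (i : 'I_(size voc)) (t : (nth 0 voc i).-tuple 'I_(usize A1).+1) :
  all (pred1 ord0) t -> t \notin srel A1 i.
Proof.
move=> /allP ha; rewrite inE; apply/negP => /eqP ht.
have : o1 \in val t by rewrite ht mem_seq2 eqxx orbT.
by move/ha.
Qed.

Lemma not_expr : ~ (exists phi : eso_sentence voc,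
           is_horn phi /\ forall A, is_succ s0 A -> (K A <-> sat A phi)).
Proof.
case=> phi [_ H].
have h1 := (H A1 KA1.2).1 KA1.
have hB := sat_sub A1_noloop h1.
by have [] := (H Bst succB).2 hB.
Qed.

Definition EE := enum {: 2.-tuple 'I_2}.
Lemma sizeE : size EE = 4.
Proof. by rewrite /EE -cardE card_tuple card_ord. Qed.

Lemma bits (f : 2.-tuple 'I_2 -> bool) (t0 : 2.-tuple 'I_2) :
  (forall t, f t = (t == t0)) ->
  [seq f t | t <- EE] = [seq j == index t0 EE | j <- iota 0 4].
Proof.
move=> Hf; apply: (@eq_from_nth _ false).
  by rewrite 2!size_map size_iota sizeE.
move=> j; rewrite size_map => hj.
have hjE : j < size EE by exact: hj.
have hj4 : j < 4 by rewrite -sizeE.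
rewrite (nth_map t0 _ _ hjE) (nth_map 0) ?size_iota // nth_iota // add0n Hf.
apply/eqP/eqP => [<-|->].
  by rewrite index_uniq ?sizeE // /EE enum_uniq.
by rewrite nth_index // /EE mem_enum.
Qed.

Lemma encode1 (r : forall i : 'I_(size voc), {set (nth 0 voc i).-tuple 'I_2}) :
  encode (@Struct voc 1 r) = [:: true; true; false] ++ [seq (t \in r s0) | t <- EE].
Proof.
rewrite /encode /=.
have : size (enum 'I_1) = 1 := size_enum_ord 1.
case E: (enum 'I_1) => [|i [|]] //= _.
by rewrite cats0 (ord1 i).
Qed.

Lemma K_ext (r r' : forall i : 'I_(size voc), {set (nth 0 voc i).-tuple 'I_2}) :
  (forall t, (t \in r s0) = (t \in r' s0)) -> K (@Struct voc 1 r') -> K (@Struct voc 1 r).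
Proof. move=> H [_ [p [pb Hp]]]; split=> //; exists p; split=> // t; rewrite H; exact: Hp. Qed.

Definition k1 := index t1 EE.
Definition k2 := index t2 EE.
Lemma hk1 : k1 < 4. Proof. by rewrite -sizeE index_mem /EE mem_enum. Qed.
Lemma hk2 : k2 < 4. Proof. by rewrite -sizeE index_mem /EE mem_enum. Qed.

Lemma r1E (t : 2.-tuple 'I_2) : (t \in [set t : 2.-tuple 'I_2 | val t == [:: o0; o1]]) = (t == t1).
Proof. by rewrite inE. Qed.
Lemma r2E (t : 2.-tuple 'I_2) : (t \in [set t : 2.-tuple 'I_2 | val t == [:: o1; o0]]) = (t == t2).
Proof. by rewrite inE. Qed.

Lemma KP A : K A <-> encode A \in [:: pat k1; pat k2].
Proof.
split.
  case: A => n r [/= hn]; subst n => -[p [pb Hp]].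
  case: (succ2 pb Hp) => H; rewrite encode1 (bits H) !inE eqxx ?orbT //.
case: A => n r; case: n r => [|[|n]] r.
- by rewrite !inE => /orP [] /eqP /(congr1 (nth false ^~ 1)).
- rewrite !inE encode1 => /orP [] /eqP [] H.
  + apply: (K_ext (r' := fun i => [set t | val t == [:: o0; o1]])) KA1 => t.
    have := etrans H (esym (bits r1E)) => /eq_in_map; apply.
    by rewrite /EE mem_enum.
  + apply: (K_ext (r' := fun i => [set t | val t == [:: o1; o0]])) KA2 => t.
    have := etrans H (esym (bits r2E)) => /eq_in_map; apply.
    by rewrite /EE mem_enum.
- by rewrite !inE => /orP [] /eqP /(congr1 (nth false ^~ 2)).
Qed.

Theorem theorem1 :
  exists (voc : seq nat) (s : 'I_(size voc)),
    nth 0 voc s = 2 /\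
    exists K : structure voc -> Prop,
      (forall A, K A -> is_succ s A) /\
      iso_closed K /\
      in_P K /\
      ~ (exists phi : eso_sentence voc,
           is_horn phi /\ forall A, is_succ s A -> (K A <-> sat A phi)).
Proof.
exists voc, s0; split=> //; exists K; split; first by move=> A [].
split; first by move=> A B HI [h1 h2]; split; [rewrite -(iso_size HI) | exact: iso_succ HI h2].
split; last exact: not_expr.
exists (TMk k1 k2), 9, 0 => A; cbv zeta; rewrite expn0 muln1.
have [hh ha] := TM_ok hk1 hk2 (encode A).
split=> //; rewrite ha; exact: iff_sym (KP A).
Qed.
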